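(* Let $q$ be odd with $q\equiv-1\pmod3$, and let $\mu\in\mathbb{F}_q$ be a non-square. Let $L_c$ be the line through $\mathbf{P}(1,0,0,1)$ and $\mathbf{P}(0,0,1,0)$, and $\ell_\mu$ the line through $\mathbf{P}(0,\mu,0,1)$ and $\mathbf{P}(1,0,1,0)$. Then $L_c$ and $\ell_\mu$ belong to the same orbit of $G_q$ if and only if $\mu=-1/3$ and $q\equiv-1\pmod{12}$.
   Context: Points of $\mathrm{PG}(3,q)$ are written $\mathbf{P}(x_0,x_1,x_2,x_3)$ over $\mathbb{F}_q$. The twisted cubic is $\mathscr{C}=\{\mathbf{P}(t^3,t^2,t,1):t\in\mathbb{F}_q\}\cup\{\mathbf{P}(1,0,0,0)\}$ and $G_q$ is the group of projectivities of $\mathrm{PG}(3,q)$ fixing $\mathscr{C}$. Two lines are in the same orbit if an element of $G_q$ maps one onto the other. *)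

(* Defs.v *)
From HB Require Import structures.
From mathcomp Require Import all_boot all_order all_algebra all_fingroup all_field.
Set Implicit Arguments. Unset Strict Implicit. Unset Printing Implicit Defensive.
Import GRing.Theory.
Local Open Scope ring_scope.

(* Points of PG(3,q) are represented by nonzero row vectors (x0,x1,x2,x3)
   of 'rV[F]_4, up to nonzero scalars; a projectivity is induced by an
   invertible 4x4 matrix A acting on row vectors by v |-> v *m A. *)

Definition vec4 (F : fieldType) (a b c d : F) : 'rV[F]_4 :=
  \row_(i < 4) nth 0 [:: a; b; c; d] i.

Definition onC (F : fieldType) (v : 'rV[F]_4) : Prop :=
  (exists t c : F, c != 0 /\ v = c *: vec4 (t ^+ 3) (t ^+ 2) t 1)
  \/ (exists c : F, c != 0 /\ v = c *: vec4 1 0 0 0).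

Definition inGq (F : fieldType) (A : 'M[F]_4) : Prop :=
  A \in unitmx /\ forall v : 'rV[F]_4, v != 0 -> (onC v <-> onC (v *m A)).

(* The line through the points P(u) and P(v): row space of the 2x4 matrix. *)
Definition line_mx (F : fieldType) (u v : 'rV[F]_4) : 'M[F]_(2, 4) :=
  col_mx u v.

Definition same_orbit (F : fieldType) (L M : 'M[F]_(2, 4)) : Prop :=
  exists A : 'M[F]_4, inGq A /\ (L *m A == M)%MS.

(* Main.v *)
Require Import Defs.
From HB Require Import structures.
From mathcomp Require Import all_boot all_order all_algebra all_fingroup all_solvable all_field.
From mathcomp Require Import ring zify.
Import GRing.Theory.
Local Open Scope ring_scope.
Set Implicit Arguments. Unset Strict Implicit. Unset Printing Implicit Defensive.

Lemma mulKeq0 (F : fieldType) (k x : F) : k != 0 -> k * x = 0 -> x = 0.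
Proof. by move=> hk /eqP; rewrite mulf_eq0 (negbTE hk) => /eqP. Qed.

Section NT.
Variable F : finFieldType.

Lemma char_card (p : nat) : prime p -> (p%:R : F) = 0 -> (p %| #|F|)%N.
Proof.
move=> pp hp.
have hc : p \in [pchar F] by rewrite inE pp hp eqxx.
have E := card_pprimeChar hc.
have E' : #|F| = (p ^ logn p #|pPrimeCharType hc|)%N := E.
rewrite E'; case: (logn _ _) E' => [|n] E'.
  by have := finNzRing_gt1 F; rewrite -/#|F| E'.
by rewrite expnS dvdn_mulr.
Qed.


Lemma card_gt1 : (1 < #|F|)%N.
Proof. exact: finNzRing_gt1. Qed.

Lemma fermat (x : F) : x != 0 -> x ^+ #|F|.-1 = 1.
Proof.
move=> hx; apply: (mulIf hx); rewrite mul1r -exprSr prednK ?expf_card //.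
by have := card_gt1; lia.
Qed.

Lemma prim_root_ex : exists g : F, (#|F|.-1).-primitive_root g.
Proof.
have n_gt0 : (0 < #|F|.-1)%N by have := card_gt1; lia.
have : has (#|F|.-1).-primitive_root (enum (predC1 (0 : F))).
  apply: has_prim_root => //; last by rewrite -cardE cardC1.
    by apply/allP => x; rewrite mem_enum inE => hx; rewrite unity_rootE fermat.
  exact: enum_uniq.
by case/hasP => g _ hg; exists g.
Qed.

Lemma nonsq_odd (g x : F) : (#|F|.-1).-primitive_root g -> (forall z, z * z != x) ->
  exists i, odd i /\ x = g ^+ i.
Proof.
move=> hg hx.
have x0 : x != 0 by apply: contraNneq (hx 0) => ->; rewrite mulr0.
have [[i hi] /= ex] := prim_rootP hg (fermat x0).
exists i; split => //.
apply/negP => /negP oi; move: (hx (g ^+ i./2)); rewrite -exprD ex.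
have := odd_double_half i; rewrite (negbTE oi) add0n -addnn => ->.
by rewrite eqxx.
Qed.

Lemma sq_of_nonsq (x y : F) : (forall z, z * z != x) -> (forall z, z * z != y) ->
  exists z, z * z = x * y.
Proof.
move=> hx hy; have [g hg] := prim_root_ex.
have [i [oi ->]] := nonsq_odd hg hx.
have [j [oj ->]] := nonsq_odd hg hy.
exists (g ^+ (i./2 + j./2 + 1)); rewrite -!exprD; congr (g ^+ _).
have := odd_double_half i; have := odd_double_half j; rewrite oi oj -!addnn; lia.
Qed.

Lemma m1_sq : (#|F| %% 4 = 1)%N -> exists z : F, z * z = -1.
Proof.
move=> h4; have [g hg] := prim_root_ex.
set m := (#|F|.-1 %/ 4)%N.
have hn : #|F|.-1 = (4 * m)%N by rewrite /m; have := card_gt1; lia.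
exists (g ^+ m).
set w := g ^+ m * g ^+ m.
have w2 : w * w = 1.
  by rewrite /w -!exprD -(prim_expr_order hg) hn; congr (g ^+ _); lia.
have w1 : w != 1.
  rewrite /w -exprD -(prim_order_dvd hg) hn.
  have m0 : (0 < m)%N by have := card_gt1; lia.
  apply/negP => /dvdn_leq; lia.
have : (w - 1) * (w + 1) = 0.
  by rewrite (_ : (w - 1) * (w + 1) = w * w - 1); [rewrite w2 subrr | ring].
move/eqP; rewrite mulf_eq0 subr_eq0 (negbTE w1) /= addr_eq0 => /eqP //.
Qed.

Lemma char2 : odd #|F| -> (2%:R : F) != 0.
Proof. by move=> ho; apply/eqP => /(char_card (isT : prime 2)); rewrite dvdn2 ho. Qed.

Lemma char3 : (#|F| %% 3 = 2)%N -> (3%:R : F) != 0.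
Proof. by move=> h; apply/eqP => /(char_card (isT : prime 3)); rewrite /dvdn h. Qed.

Lemma m1_nonsq : (#|F| %% 4 = 3)%N -> (2%:R : F) != 0 -> forall z : F, z * z != -1.
Proof.
move=> h4 h2 z; apply/eqP => hz.
have z0 : z != 0 by apply: contra_eq_neq hz => ->; rewrite mulr0 eq_sym oppr_eq0 oner_eq0.
have := fermat z0.
have -> : z ^+ #|F|.-1 = (z * z) ^+ (2 * (#|F|.-1 %/ 4) + 1).
  rewrite -expr2 -exprM; congr (z ^+ _); have := card_gt1; lia.
rewrite hz -signr_odd oddD oddM /= expr1 => /eqP.
rewrite -subr_eq0 -opprD oppr_eq0 => /eqP h; move/eqP: h2; apply.
by rewrite -h; ring.
Qed.

Lemma m3_nonsq : (#|F| %% 3 = 2)%N -> (2%:R : F) != 0 -> forall s : F, s * s != -(3%:R).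
Proof.
move=> h3 h2 s; apply/eqP => hs.
have h3' := char3 h3.
set w := (s - 1) / 2%:R.
have w3 : w ^+ 3 = 1.
  have -> : w ^+ 3 = (s * s + 3%:R) * (w - 1) / (2%:R * 2%:R) + 1.
    rewrite /w; field; rewrite h2 andbT; have -> : (4%:R : F) = 2%:R * 2%:R by ring.
    by rewrite mulf_neq0.
  by rewrite hs addNr !mul0r add0r.
have w0 : w != 0 by apply: contra_eq_neq w3 => ->; rewrite expr0n /= eq_sym oner_eq0.
have := fermat w0.
have -> : w ^+ #|F|.-1 = (w ^+ 3) ^+ (#|F|.-1 %/ 3) * w.
  rewrite -exprM -exprSr; congr (w ^+ _); have := card_gt1; lia.
rewrite w3 expr1n mul1r => w1.
move: hs; rewrite -[s](_ : 2%:R * w + 1 = s); last by rewrite /w; field.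
rewrite w1 => /eqP; rewrite -subr_eq0.
rewrite (_ : (2%:R * 1 + 1) * (2%:R * 1 + 1) - - 3%:R = 3%:R * (2%:R * 2%:R) :> F); last by ring.
by rewrite !mulf_eq0 (negbTE h2) (negbTE h3').
Qed.

Lemma cube_root : (#|F| %% 3 = 2)%N -> forall T : F, exists t, t ^+ 3 = T.
Proof.
move=> h3.
have inj : injective (fun t : F => t ^+ 3).
  move=> x y /= e.
  case: (eqVneq y 0) => [y0 | y0].
    by move: e; rewrite y0 expr0n /= => /eqP; rewrite expf_eq0 /= => /eqP.
  set w := x / y.
  have w3 : w ^+ 3 = 1 by rewrite /w expr_div_n e divff // expf_neq0.
  have w0 : w != 0 by apply: contra_eq_neq w3 => ->; rewrite expr0n /= eq_sym oner_eq0.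
  have := fermat w0.
  have -> : w ^+ #|F|.-1 = (w ^+ 3) ^+ (#|F|.-1 %/ 3) * w.
    rewrite -exprM -exprSr; congr (w ^+ _); have := card_gt1; lia.
  by rewrite w3 expr1n mul1r /w => e1; rewrite -(divfK y0 x) e1 mul1r.
have [g _ Kg] := injF_bij inj.
by move=> T; exists (g T); rewrite Kg.
Qed.


Lemma root_ok (s r : F) : (3%:R : F) != 0 -> s * s = 3%:R -> r * r = (- 3%:R + 2%:R * s) / 3%:R ->
  3%:R * r^+4 + 6%:R * r^+2 - 1 = 0.
Proof.
move=> h3 hs hr.
rewrite (_ : 3%:R * r^+4 + 6%:R * r^+2 - 1 = 3%:R * (r * r)^+2 + 6%:R * (r * r) - 1); last by ring.
rewrite hr (_ : _ - 1 = 4%:R / 3%:R * (s * s - 3%:R)); last by field.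
by rewrite hs subrr mulr0.
Qed.

Lemma witness_ex (mu : F) : odd #|F| -> (#|F| %% 3 = 2)%N -> (#|F| %% 12 = 11)%N ->
  mu = - (3%:R^-1) -> (forall x : F, x * x != mu) ->
  exists r t : F, 3%:R * r^+4 + 6%:R * r^+2 - 1 = 0 /\ t^+3 * (56%:R * r^+2 - 8%:R) - (1 - r^+2) = 0.
Proof.
move=> ho h3 h12 emu hmu.
have h2F := char2 ho; have h3F := char3 h3.
have h4 : (#|F| %% 4 = 3)%N by lia.
have [s hs] : exists s : F, s * s = 3%:R.
  have [z hz] := sq_of_nonsq (m1_nonsq h4 h2F) (m3_nonsq h3 h2F).
  by exists z; rewrite hz mulN1r opprK.
have key : forall s' : F, s' * s' = 3%:R -> (exists r : F, r * r = (- 3%:R + 2%:R * s') / 3%:R) ->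
    exists r t : F, 3%:R * r^+4 + 6%:R * r^+2 - 1 = 0 /\ t^+3 * (56%:R * r^+2 - 8%:R) - (1 - r^+2) = 0.
  move=> s' hs' [r hr]; exists r.
  have hroot := root_ok h3F hs' hr.
  have h56 : 56%:R * r^+2 - 8%:R != 0 :> F.
    apply/eqP => e.
    have h8 : (2%:R * 2%:R * 2%:R : F) != 0 by rewrite !mulf_neq0.
    have e7 : 7%:R * r^+2 = 1 :> F.
      apply/eqP; rewrite -subr_eq0; apply/eqP; apply: (mulKeq0 h8).
      by rewrite -[RHS]e; ring.
    have : 3%:R * (7%:R * r^+2)^+2 + 42%:R * (7%:R * r^+2) - 49%:R = 0 :> F.
      by rewrite -[RHS](mulr0 (7%:R * 7%:R)) -hroot; ring.
    rewrite e7 (_ : 3%:R * 1^+2 + 42%:R * 1 - 49%:R = - (2%:R * 2%:R) :> F); last by ring.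
    move/eqP; apply/negP.
    by rewrite oppr_eq0 mulf_neq0.
  have [t ht] := cube_root h3 ((1 - r^+2) / (56%:R * r^+2 - 8%:R)).
  by exists t; split => //; rewrite ht mulfVK // subrr.
case: (boolP [exists r : F, r * r == (- 3%:R + 2%:R * s) / 3%:R]) => [/existsP [r /eqP hr] | n1].
  by apply: (key s hs); exists r.
case: (boolP [exists r : F, r * r == (- 3%:R - 2%:R * s) / 3%:R]) => [/existsP [r /eqP hr] | n2].
  apply: (key (- s)); first by rewrite mulrNN.
  by exists r; rewrite hr mulrN.
have nq1 : forall z : F, z * z != (- 3%:R + 2%:R * s) / 3%:R.
  by move=> z; apply/negP => hz; move: n1; rewrite negb_exists => /forallP /(_ z); rewrite hz.
have nq2 : forall z : F, z * z != (- 3%:R - 2%:R * s) / 3%:R.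
  by move=> z; apply/negP => hz; move: n2; rewrite negb_exists => /forallP /(_ z); rewrite hz.
have [z hz] := sq_of_nonsq nq1 nq2.
case/negP: (hmu z); apply/eqP; rewrite hz emu.
have h9 : (9%:R : F) != 0.
  by rewrite (_ : 9%:R = 3%:R * 3%:R :> F); [rewrite mulf_neq0 | ring].
rewrite (_ : (- 3%:R + 2%:R * s) / 3%:R * ((- 3%:R - 2%:R * s) / 3%:R) = (9%:R - 4%:R * (s * s)) / (3%:R * 3%:R)).
  by rewrite hs; field; rewrite ?h9 ?h3F.
by field; rewrite ?h9 ?h3F.
Qed.

End NT.

Section S.
Variable F : fieldType.

Lemma cubic0 (c3 c2 c1 c0 : F) : (2%:R : F) != 0 -> (3%:R : F) != 0 ->
  (forall t : F, t \in [:: 1; -1; 2%:R; -(2%:R)] -> c3 * t^+3 + c2 * t^+2 + c1 * t + c0 = 0) ->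
  [/\ c3 = 0, c2 = 0, c1 = 0 & c0 = 0].
Proof.
move=> h2 h3 H.
have e1 := H 1 ltac:(by rewrite inE eqxx).
have em1 := H (-1) ltac:(by rewrite !inE eqxx orbT).
have e2 := H 2%:R ltac:(by rewrite !inE eqxx !orbT).
have em2 := H (-(2%:R)) ltac:(by rewrite !inE eqxx !orbT).
have h6 : (2%:R * 3%:R : F) != 0 by rewrite mulf_neq0.
have h12 : (2%:R * 2%:R * 3%:R : F) != 0 by rewrite !mulf_neq0.
split.
- have : 2%:R * 2%:R * 3%:R * c3 = (c3 * 2%:R^+3 + c2 * 2%:R^+2 + c1 * 2%:R + c0)
     - (c3 * (-(2%:R))^+3 + c2 * (-(2%:R))^+2 + c1 * (-(2%:R)) + c0)
     - 2%:R * ((c3 * 1^+3 + c2 * 1^+2 + c1 * 1 + c0) - (c3 * (-1)^+3 + c2 * (-1)^+2 + c1 * (-1) + c0)) :> F by ring.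
  move=> E; apply: (mulKeq0 h12); rewrite E e1 em1 e2 em2; ring.
- have : 2%:R * 3%:R * c2 = (c3 * 2%:R^+3 + c2 * 2%:R^+2 + c1 * 2%:R + c0)
     + (c3 * (-(2%:R))^+3 + c2 * (-(2%:R))^+2 + c1 * (-(2%:R)) + c0)
     - ((c3 * 1^+3 + c2 * 1^+2 + c1 * 1 + c0) + (c3 * (-1)^+3 + c2 * (-1)^+2 + c1 * (-1) + c0)) :> F by ring.
  move=> E; apply: (mulKeq0 h6); rewrite E e1 em1 e2 em2; ring.
- have : 2%:R * 2%:R * 3%:R * c1 = 2%:R * 2%:R * 2%:R * ((c3 * 1^+3 + c2 * 1^+2 + c1 * 1 + c0) - (c3 * (-1)^+3 + c2 * (-1)^+2 + c1 * (-1) + c0))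
     - ((c3 * 2%:R^+3 + c2 * 2%:R^+2 + c1 * 2%:R + c0)
     - (c3 * (-(2%:R))^+3 + c2 * (-(2%:R))^+2 + c1 * (-(2%:R)) + c0)) :> F by ring.
  move=> E; apply: (mulKeq0 h12); rewrite E e1 em1 e2 em2; ring.
- have : 2%:R * 3%:R * c0 = 2%:R * 2%:R * ((c3 * 1^+3 + c2 * 1^+2 + c1 * 1 + c0) + (c3 * (-1)^+3 + c2 * (-1)^+2 + c1 * (-1) + c0))
     - ((c3 * 2%:R^+3 + c2 * 2%:R^+2 + c1 * 2%:R + c0)
     + (c3 * (-(2%:R))^+3 + c2 * (-(2%:R))^+2 + c1 * (-(2%:R)) + c0)) :> F by ring.
  move=> E; apply: (mulKeq0 h6); rewrite E e1 em1 e2 em2; ring.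
Qed.
Lemma diag_class (al de p0 p1 p2 p3 s0 s1 s2 s3 : F) :
  (2%:R : F) != 0 -> (3%:R : F) != 0 -> al != 0 -> de != 0 -> ~ (p1 = 0 /\ s1 = 0) ->
  (forall t : F, t \in [:: 1; -1; 2%:R; -(2%:R)] ->
     (t^+2 * p1 + t * s1)^+2 = (t^+3 * al + t^+2 * p0 + t * s0) * (t^+2 * p2 + t * s2) /\
     (t^+2 * p2 + t * s2)^+2 = (t^+2 * p1 + t * s1) * (t^+2 * p3 + t * s3 + de)) ->
  [/\ p0 = 0, p2 = 0, p3 = 0, s0 = 0 & [/\ s1 = 0, s3 = 0, al * s2 = p1^+2 & s2^+2 = p1 * de]].
Proof.
move=> h2 h3 hal hde hp H.
have tnz : forall t : F, t \in [:: 1; -1; 2%:R; -(2%:R)] -> t != 0.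
  move=> t; rewrite !inE => /or4P[] /eqP ->; rewrite ?oppr_eq0 ?oner_eq0 //.
have [a3 a2 a1 a0] : [/\ - al * p2 = 0, p1^+2 - al * s2 - p0 * p2 = 0,
     2%:R * p1 * s1 - p0 * s2 - s0 * p2 = 0 & s1^+2 - s0 * s2 = 0].
  apply: cubic0 => // t ht; have [H1 _] := H t ht.
  apply: (mulKeq0 (expf_neq0 2 (tnz t ht))).
  have -> : t^+2 * ((- al * p2) * t^+3 + (p1^+2 - al * s2 - p0 * p2) * t^+2 + (2%:R * p1 * s1 - p0 * s2 - s0 * p2) * t
     + (s1^+2 - s0 * s2)) = (t^+2 * p1 + t * s1)^+2 - (t^+3 * al + t^+2 * p0 + t * s0) * (t^+2 * p2 + t * s2) by ring.
  by rewrite H1 subrr.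
have [b3 b2 b1 b0] : [/\ p2^+2 - p1 * p3 = 0, 2%:R * p2 * s2 - p1 * s3 - s1 * p3 = 0,
     s2^+2 - p1 * de - s1 * s3 = 0 & - s1 * de = 0].
  apply: cubic0 => // t ht; have [_ H2] := H t ht.
  apply: (mulKeq0 (tnz t ht)).
  have -> : t * ((p2^+2 - p1 * p3) * t^+3 + (2%:R * p2 * s2 - p1 * s3 - s1 * p3) * t^+2 + (s2^+2 - p1 * de - s1 * s3) * t
     + (- s1 * de)) = (t^+2 * p2 + t * s2)^+2 - (t^+2 * p1 + t * s1) * (t^+2 * p3 + t * s3 + de) by ring.
  by rewrite H2 subrr.
have ep2 : p2 = 0 by apply: (@mulKeq0 _ (- al)); [rewrite oppr_eq0 | rewrite -a3; ring].
have es1 : s1 = 0 by apply: (@mulKeq0 _ (- de)); [rewrite oppr_eq0 | rewrite -b0; ring].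
have hp1 : p1 != 0 by apply/eqP => e; apply: hp.
subst p2 s1.
have es2 : al * s2 = p1^+2 by apply/eqP; rewrite eq_sym -subr_eq0; rewrite -a2; apply/eqP; ring.
have hs2 : s2 != 0 by apply/eqP => e; move: es2; rewrite e mulr0 => /esym/eqP; rewrite expf_eq0 (negbTE hp1) andbF.
have ep0 : p0 = 0 by apply: (mulKeq0 hs2); rewrite -[RHS]oppr0 -a1; ring.
have es0 : s0 = 0 by apply: (mulKeq0 hs2); rewrite -[RHS]oppr0 -a0; ring.
have ep3 : p3 = 0 by apply: (mulKeq0 hp1); rewrite -[RHS]oppr0 -b3; ring.
have es3 : s3 = 0 by apply: (mulKeq0 hp1); rewrite -[RHS]oppr0 -b2 ep3; ring.
split => //; split => //.
by apply/eqP; rewrite -subr_eq0 -b1; apply/eqP; ring.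
Qed.

Ltac ord4 j := case: j => [[|[|[|[|?]]]] ?] //=.
Ltac ordn i := let H := fresh "H" in case: i => [[|[|[|[|?]]]] H] //=;
  [ have -> : Ordinal H = 0 by apply/val_inj
  | have -> : Ordinal H = 1 by apply/val_inj
  | have -> : Ordinal H = 2%:R by apply/val_inj
  | have -> : Ordinal H = 3%:R by apply/val_inj ].
Ltac vring := apply/rowP; case => [[|[|[|[|?]]]] ?]; rewrite !mxE //=; try ring.

Lemma vec4E (v : 'rV[F]_4) : v = vec4 (v 0 0) (v 0 1) (v 0 2) (v 0 3).
Proof.
apply/rowP => j; rewrite !mxE; ord4 j; by congr (v _ _); apply/val_inj.
Qed.

Lemma vec4_mulmx (p0 p1 p2 p3 : F) (A : 'M[F]_4) :
  vec4 p0 p1 p2 p3 *m A =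
  \row_j (p0 * A 0 j + p1 * A 1 j + p2 * A 2 j + p3 * A 3 j).
Proof.
apply/rowP => j; rewrite !mxE !big_ord_recr big_ord0 /= !mxE /= add0r.
by congr (_ + _ + _ + _); congr (_ * A _ j); apply/val_inj.
Qed.

Definition mono (x y : F) : 'rV[F]_4 := vec4 (x^+3) (x^+2 * y) (x * y^+2) (y^+3).
Definition sym3 (a b c d : F) : 'M[F]_4 := \matrix_(i < 4, j < 4) nth 0 (nth [::]
  [:: [:: a^+3; a^+2 * b; a * b^+2; b^+3];
      [:: 3%:R * a^+2 * c; a^+2 * d + 2%:R * a * b * c; 2%:R * a * b * d + b^+2 * c; 3%:R * b^+2 * d];
      [:: 3%:R * a * c^+2; 2%:R * a * c * d + b * c^+2; a * d^+2 + 2%:R * b * c * d; 3%:R * b * d^+2];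
      [:: c^+3; c^+2 * d; c * d^+2; d^+3]] i) j.

Lemma mono_sym3 (x y a b c d : F) :
  mono x y *m sym3 a b c d = mono (a * x + c * y) (b * x + d * y).
Proof. rewrite vec4_mulmx; apply/rowP => j; rewrite !mxE; ord4 j; ring. Qed.

Lemma sym3_mul (a b c d a' b' c' d' : F) :
  sym3 a b c d *m sym3 a' b' c' d' =
  sym3 (a * a' + b * c') (a * b' + b * d') (c * a' + d * c') (c * b' + d * d').
Proof.
apply/matrixP => i j; rewrite !mxE !big_ord_recr big_ord0 /= !mxE /= add0r.
ord4 i; ord4 j; ring.
Qed.

Lemma sym3_id : sym3 1 0 0 1 = 1%:M.
Proof. apply/matrixP => i j; rewrite !mxE; ord4 i; ord4 j; ring. Qed.

Lemma onC_mono v : onC v ->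
  exists k x y, [/\ k != 0, (x != 0) || (y != 0) & v = k *: mono x y].
Proof.
case=> [[t [c [hc ->]]] | [c [hc ->]]].
  exists c, t, 1; split => //; first by rewrite oner_eq0 orbT.
  by congr (_ *: _); vring.
exists c, 1, 0; split => //; first by rewrite oner_eq0.
by congr (_ *: _); vring.
Qed.

Lemma mono_onC (k x y : F) : k != 0 -> (x != 0) || (y != 0) -> onC (k *: mono x y).
Proof.
move=> hk; case: (eqVneq y 0) => [-> | hy] hx.
  rewrite /= orbF in hx.
  right; exists (k * x^+3); split; first by rewrite mulf_neq0 ?expf_neq0.
  vring.
left; exists (x / y), (k * y^+3); split; first by rewrite mulf_neq0 ?expf_neq0.
apply/rowP => j; rewrite !mxE; ord4 j; field; done.
Qed.

Lemma hankel_mono (k x y : F) (v : 'rV[F]_4) : v = k *: mono x y ->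
  v 0 1 ^+ 2 = v 0 0 * v 0 2 /\ v 0 2 ^+ 2 = v 0 1 * v 0 3.
Proof. move=> ->; rewrite !mxE /=; split; ring. Qed.


Lemma sym3_onC (a b c d : F) v : a * d - b * c != 0 -> onC v -> onC (v *m sym3 a b c d).
Proof.
move=> hD /onC_mono [k [x [y [hk hxy ->]]]].
rewrite -scalemxAl mono_sym3; apply: mono_onC => //.
apply/orP; case: (eqVneq (a * x + c * y) 0) => e1; last by left.
right; apply/eqP => e2.
have ex : (a * d - b * c) * x = 0.
  by rewrite (_ : _ * x = d * (a * x + c * y) - c * (b * x + d * y)); [rewrite e1 e2; ring | ring].
have ey : (a * d - b * c) * y = 0.
  by rewrite (_ : _ * y = a * (b * x + d * y) - b * (a * x + c * y)); [rewrite e1 e2; ring | ring].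
by move: hxy; rewrite (mulKeq0 hD ex) (mulKeq0 hD ey) eqxx.
Qed.

Lemma sym3_inv (a b c d : F) : a * d - b * c != 0 ->
  let D := a * d - b * c in
  sym3 a b c d *m sym3 (d / D) (- b / D) (- c / D) (a / D) = 1%:M /\
  sym3 (d / D) (- b / D) (- c / D) (a / D) *m sym3 a b c d = 1%:M.
Proof.
move=> hD D; rewrite !sym3_mul -sym3_id; split; congr sym3; rewrite /D; field; done.
Qed.

Lemma inGq_sym3 (a b c d : F) : a * d - b * c != 0 -> inGq (sym3 a b c d).
Proof.
move=> hD; have [h1 h2] := sym3_inv hD.
split; first by case: (mulmx1_unit h1).
move=> v _; split; first exact: sym3_onC.
move=> /(sym3_onC (a := d / (a * d - b * c)) (b := - b / (a * d - b * c))
   (c := - c / (a * d - b * c)) (d := a / (a * d - b * c))).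
rewrite -mulmxA h1 mulmx1; apply.
set D := a * d - b * c.
have -> : d / D * (a / D) - - b / D * (- c / D) = D^-1 by rewrite /D; field.
by rewrite invr_eq0.
Qed.


Lemma vec_mulmx0 (A : 'M[F]_4) (v : 'rV[F]_4) : A \in unitmx -> v *m A = 0 -> v = 0.
Proof. by move=> hA e; rewrite -(mulmxK hA v) e mul0mx. Qed.

Lemma classify (A : 'M[F]_4) : (2%:R : F) != 0 -> (3%:R : F) != 0 -> A \in unitmx ->
  (forall v, v != 0 -> onC v -> onC (v *m A)) ->
  exists l a b c d, [/\ l != 0, a * d - b * c != 0 & A = l *: sym3 a b c d].
Proof.
move=> h2 h3 hA H.
have e1nz : vec4 1 0 0 0 != 0 :> 'rV[F]_4.
  by apply/eqP => /rowP /(_ 0); rewrite !mxE /= => /eqP; rewrite oner_eq0.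
have e4nz : vec4 0 0 0 1 != 0 :> 'rV[F]_4.
  by apply/eqP => /rowP /(_ 3); rewrite !mxE /= => /eqP; rewrite oner_eq0.
have e1C : onC (vec4 1 0 0 0 : 'rV[F]_4).
  by right; exists 1; rewrite oner_eq0 scale1r.
have e4C : onC (vec4 0 0 0 1 : 'rV[F]_4).
  by left; exists 0, 1; rewrite oner_eq0 scale1r; split => //; vring.
have [k1 [x1 [y1 [hk1 hxy1 E1]]]] := onC_mono (H _ e1nz e1C).
have [k4 [x4 [y4 [hk4 hxy4 E4]]]] := onC_mono (H _ e4nz e4C).
set D := x1 * y4 - y1 * x4.
have hD : D != 0.
  apply/eqP => hD0.
  have [la hla] : exists la, mono x1 y1 = la *: mono x4 y4.
    case: (eqVneq x4 0) => hx4.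
    - rewrite hx4 eqxx /= in hxy4.
      have ex1 : x1 = 0.
        by apply: (mulKeq0 hxy4); rewrite mulrC -[RHS]hD0 /D hx4; ring.
      exists ((y1 / y4)^+3); rewrite ex1 hx4; apply/rowP => j; rewrite !mxE; ord4 j; field; done.
    - have ey1 : y1 = x1 * y4 / x4.
        by apply/(mulIf hx4); rewrite mulfVK //; apply/eqP; rewrite -subr_eq0; apply/eqP; rewrite -[RHS]oppr0 -hD0 /D; ring.
      exists ((x1 / x4)^+3); rewrite ey1; apply/rowP => j; rewrite !mxE; ord4 j; field; done.
  have : (vec4 1 0 0 0 - (k1 * la / k4) *: vec4 0 0 0 1) *m A = 0.
    rewrite mulmxBl -scalemxAl E1 E4 hla scalerA; apply/eqP; rewrite subr_eq0; apply/eqP.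
    by rewrite scalerA; congr (_ *: _); field.
  move/(vec_mulmx0 hA)/rowP/(_ 0); rewrite !mxE /= => /eqP.
  by rewrite mulr0 subr0 oner_eq0.
have [hS'S hSS'] : sym3 (y4 / D) (- y1 / D) (- x4 / D) (x1 / D) *m sym3 x1 y1 x4 y4 = 1%:M /\
                   sym3 x1 y1 x4 y4 *m sym3 (y4 / D) (- y1 / D) (- x4 / D) (x1 / D) = 1%:M.
  have [i1 i2] := sym3_inv hD; split; [exact: i2 | exact: i1].
set S' := sym3 (y4 / D) (- y1 / D) (- x4 / D) (x1 / D) in hS'S hSS'.
have hS'u : S' \in unitmx by case: (mulmx1_unit hS'S).
have [B eB] : exists B, B = A *m S' by exists (A *m S').
have hBu : B \in unitmx by rewrite eB unitmx_mul hA hS'u.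
have hAB : A = B *m sym3 x1 y1 x4 y4 by rewrite eB -mulmxA hS'S mulmx1.
have hm1 : mono x1 y1 *m S' = mono 1 0 by rewrite mono_sym3; congr mono; rewrite /D; field.
have hm4 : mono x4 y4 *m S' = mono 0 1 by rewrite mono_sym3; congr mono; rewrite /D; field.
have r0 : forall j, B 0 j = (k1 *: vec4 1 0 0 0) 0 j.
  move=> j; have : vec4 1 0 0 0 *m B = k1 *: mono 1 0 by rewrite eB mulmxA E1 -scalemxAl hm1.
  move/rowP/(_ j); rewrite vec4_mulmx !mxE => e.
  rewrite (_ : B 0 j = 1 * B 0 j + 0 * B 1 j + 0 * B 2 j + 0 * B 3 j); last by ring.
  by rewrite e ?mxE; clear e; ord4 j; ring.
have r3 : forall j, B 3 j = (k4 *: vec4 0 0 0 1) 0 j.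
  move=> j; have : vec4 0 0 0 1 *m B = k4 *: mono 0 1 by rewrite eB mulmxA E4 -scalemxAl hm4.
  move/rowP/(_ j); rewrite vec4_mulmx !mxE => e.
  rewrite (_ : B 3 j = 0 * B 0 j + 0 * B 1 j + 0 * B 2 j + 1 * B 3 j); last by ring.
  by rewrite e ?mxE; clear e; ord4 j; ring.
have HK : forall t : F, t \in [:: 1; -1; 2%:R; -(2%:R)] ->
   (t^+2 * B 1 1 + t * B 2 1)^+2 = (t^+3 * k1 + t^+2 * B 1 0 + t * B 2 0) * (t^+2 * B 1 2 + t * B 2 2) /\
   (t^+2 * B 1 2 + t * B 2 2)^+2 = (t^+2 * B 1 1 + t * B 2 1) * (t^+2 * B 1 3 + t * B 2 3 + k4).
  move=> t _.
  have ctnz : vec4 (t^+3) (t^+2) t 1 != 0 :> 'rV[F]_4.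
    by apply/eqP => /rowP /(_ 3); rewrite !mxE /= => /eqP; rewrite oner_eq0.
  have ctC : onC (vec4 (t^+3) (t^+2) t 1 : 'rV[F]_4) by left; exists t, 1; rewrite oner_eq0 scale1r.
  have [k [x [y [_ _ Et]]]] := onC_mono (H _ ctnz ctC).
  have EB : vec4 (t^+3) (t^+2) t 1 *m B =
     k *: mono (y4 / D * x + - x4 / D * y) (- y1 / D * x + x1 / D * y).
    by rewrite eB mulmxA Et -scalemxAl mono_sym3.
  have [hk1' hk2'] := hankel_mono EB.
  have Y : forall j, (vec4 (t^+3) (t^+2) t 1 *m B) 0 j = t^+3 * B 0 j + t^+2 * B 1 j + t * B 2 j + 1 * B 3 j.
    by move=> j; rewrite vec4_mulmx mxE.
  have Y0 : (vec4 (t^+3) (t^+2) t 1 *m B) 0 0 = t^+3 * k1 + t^+2 * B 1 0 + t * B 2 0.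
    by rewrite Y r0 r3 !mxE /=; ring.
  have Y1 : (vec4 (t^+3) (t^+2) t 1 *m B) 0 1 = t^+2 * B 1 1 + t * B 2 1.
    by rewrite Y r0 r3 !mxE /=; ring.
  have Y2 : (vec4 (t^+3) (t^+2) t 1 *m B) 0 2%:R = t^+2 * B 1 2%:R + t * B 2 2%:R.
    by rewrite Y r0 r3 !mxE /=; ring.
  have Y3 : (vec4 (t^+3) (t^+2) t 1 *m B) 0 3%:R = t^+2 * B 1 3%:R + t * B 2 3%:R + k4.
    by rewrite Y r0 r3 !mxE /=; ring.
  by rewrite -Y0 -Y1 -Y2 -Y3.
have hp : ~ (B 1 1 = 0 /\ B 2 1 = 0).
  case=> z1 z2.
  have [v ev] : exists v, v = vec4 0 1 0 0 *m invmx B by exists (vec4 0 1 0 0 *m invmx B).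
  have hv : v *m B = vec4 0 1 0 0 by rewrite ev mulmxKV.
  move: hv; rewrite [v in v *m B]vec4E vec4_mulmx => /rowP /(_ 1).
  rewrite !mxE r0 r3 z1 z2 !mxE /= => /eqP.
  by rewrite !mulr0 !addr0 eq_sym oner_eq0.
have [e10 e12 e13 e20 [e21 e23 eq1 eq2]] := diag_class h2 h3 hk1 hk4 hp HK.
have hp1 : B 1 1 != 0 by apply/eqP => z; apply: hp.
set kk := B 1 1 / k1.
have eB22 : B 2%:R 2%:R = B 1 1 ^+ 2 / k1 by rewrite -eq1; field.
have ek4 : k4 = B 1 1 ^+ 3 / k1 ^+ 2.
  by apply/(mulfI hp1); rewrite -eq2 eB22; field.
have hBs : B = k1 *: sym3 1 0 0 kk.
  apply/matrixP => i j; rewrite [RHS]mxE [sym3 _ _ _ _ _ _]mxE.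
  ordn i; ordn j; rewrite ?r0 ?r3 ?e10 ?e12 ?e13 ?e20 ?e21 ?e23 ?eB22 ?mxE /= /kk ?ek4; field; done.
exists k1, x1, y1, (kk * x4), (kk * y4); split => //.
  have -> : x1 * (kk * y4) - y1 * (kk * x4) = kk * D by rewrite /D; ring.
  by rewrite mulf_neq0 // /kk mulf_neq0 ?invr_eq0.
rewrite hAB hBs -scalemxAl sym3_mul; congr (_ *: _); congr sym3; ring.
Qed.


Lemma line_mxE (u v : 'rV[F]_4) i j :
  line_mx u v i j = if (i : nat) == 0%N then u 0 j else v 0 j.
Proof.
rewrite /line_mx -(splitK (i : 'I_(1 + 1))); case: (split _) => k /=.
  by rewrite (ord1 k) /=; apply: (col_mxEu u v).
by rewrite (ord1 k); apply: (col_mxEd u v).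
Qed.

Lemma line_mxM (u v : 'rV[F]_4) (A : 'M[F]_4) : line_mx u v *m A = col_mx (u *m A) (v *m A).
Proof. exact: (@mul_col_mx _ 1 1 4 4 u v A). Qed.

Lemma line_mx_sub (u v : 'rV[F]_4) (A : 'M[F]_4) (M : 'M[F]_(2, 4)) :
  (line_mx u v *m A <= M)%MS = (u *m A <= M)%MS && (v *m A <= M)%MS.
Proof. rewrite line_mxM; exact: (@col_mx_sub F 1 1 4 (u *m A) (v *m A) 2 M). Qed.

Lemma Lc_free : row_free (line_mx (vec4 1 0 0 1) (vec4 0 0 1 0) : 'M[F]_(2,4)).
Proof.
apply/row_freeP.
exists (\matrix_(i < 4, j < 2) ((((i : nat) == 0%N) && ((j : nat) == 0%N)) || (((i : nat) == 2%N) && ((j : nat) == 1%N)))%:R).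
apply/matrixP => i j; rewrite !mxE !big_ord_recr !big_ord0 /= !line_mxE !mxE.
case: i => [[|[|?]] ?]; case: j => [[|[|?]] ?] //=; ring.
Qed.

Lemma in_lmu (mu : F) (x : 'rV[F]_4) :
  (x <= line_mx (vec4 0 mu 0 1) (vec4 1 0 1 0))%MS -> x 0 0 = x 0 2%:R /\ x 0 1 = mu * x 0 3%:R.
Proof.
case/submxP => Dm ->; rewrite !mxE !big_ord_recr !big_ord0 /= !line_mxE !mxE /=.
split; ring.
Qed.

Lemma in_lmu' (mu : F) (x : 'rV[F]_4) :
  x 0 0 = x 0 2%:R -> x 0 1 = mu * x 0 3%:R -> (x <= line_mx (vec4 0 mu 0 1) (vec4 1 0 1 0))%MS.
Proof.
move=> h1 h2; apply/submxP; exists (\row_(j < 2) (if (j : nat) == 0%N then x 0 3%:R else x 0 0)).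
apply/rowP => j; rewrite !mxE !big_ord_recr !big_ord0 /= !line_mxE !mxE /=.
ordn j.
- by ring.
- by rewrite h2; ring.
- by rewrite -h1; ring.
- by ring.
Qed.


Lemma alg_bwd (r t : F) : (2%:R : F) != 0 -> (3%:R : F) != 0 ->
  3%:R * r^+4 + 6%:R * r^+2 - 1 = 0 -> t^+3 * (56%:R * r^+2 - 8%:R) - (1 - r^+2) = 0 ->
  forall a b c d m, a = 2%:R * r * t -> b = (3%:R * r^+2 - 1) * t -> c = r -> d = 1 -> m = - (3%:R^-1) ->
  [/\ a * d - b * c != 0, (a^+3 + c^+3 - a * b^+2 - c * d^+2) = 0,
      (a^+2 * b + c^+2 * d - m * (b^+3 + d^+3)) = 0,
      (3%:R * a * c^+2 - a * d^+2 - 2%:R * b * c * d) = 0 &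
      (b * c^+2 + 2%:R * a * c * d - 3%:R * m * b * d^+2) = 0].
Proof.
move=> h2 h3 hroot hrel a b c d m -> -> -> -> ->.
have h8 : (8%:R : F) != 0.
  by rewrite (_ : 8%:R = 2%:R * 2%:R * 2%:R :> F) ?mulf_neq0 //; ring.
split.
- have -> : 2%:R * r * t * 1 - (3%:R * r^+2 - 1) * t * r = 3%:R * r * t * (1 - r^+2) by ring.
  have r0 : r != 0.
    apply/eqP => r0; move: hroot; rewrite r0 => /eqP.
    by rewrite (_ : 3%:R * 0^+4 + 6%:R * 0^+2 - 1 = - 1 :> F) ?oppr_eq0 ?oner_eq0 //; ring.
  have r1 : 1 - r^+2 != 0.
    apply/eqP => r1; move: hroot.
    rewrite (_ : 3%:R * r^+4 + 6%:R * r^+2 - 1 = 3%:R * (1 - r^+2)^+2 - 12%:R * (1 - r^+2) + 8%:R); last by ring.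
    by rewrite r1 => /eqP; rewrite (_ : 3%:R * 0^+2 - 12%:R * 0 + 8%:R = 8%:R :> F) ?(negbTE h8) //; ring.
  have t0 : t != 0.
    apply/eqP => t0; move: hrel; rewrite t0 => /eqP.
    by rewrite (_ : 0^+3 * (56%:R * r^+2 - 8%:R) - (1 - r^+2) = - (1 - r^+2) :> F) ?oppr_eq0 ?(negbTE r1) //; ring.
  by rewrite !mulf_neq0.
- rewrite (_ : _ - _ = (- (6%:R * r * t^+3)) * (3%:R * r^+4 + 6%:R * r^+2 - 1)
     + r * (t^+3 * (56%:R * r^+2 - 8%:R) - (1 - r^+2))); last by ring.
  by rewrite hroot hrel; ring.
- apply: (mulKeq0 (mulf_neq0 h2 h3)).
  rewrite (_ : _ * _ = (1 + 26%:R * t^+3 + 18%:R * r^+2 * t^+3) * (3%:R * r^+4 + 6%:R * r^+2 - 1)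
     + (- 3%:R - 3%:R * r^+2) * (t^+3 * (56%:R * r^+2 - 8%:R) - (1 - r^+2))); last by field.
  by rewrite hroot hrel; ring.
- by ring.
- rewrite (_ : _ - _ = t * (3%:R * r^+4 + 6%:R * r^+2 - 1)); last by field.
  by rewrite hroot mulr0.
Qed.

Lemma alg_fwd (a b c d m : F) : (2%:R : F) != 0 -> (3%:R : F) != 0 -> a * d - b * c != 0 ->
  (a^+3 + c^+3 - a * b^+2 - c * d^+2) = 0 -> (a^+2 * b + c^+2 * d - m * (b^+3 + d^+3)) = 0 ->
  (3%:R * a * c^+2 - a * d^+2 - 2%:R * b * c * d) = 0 -> (b * c^+2 + 2%:R * a * c * d - 3%:R * m * b * d^+2) = 0 ->
  3%:R * m + 1 = 0 /\ exists s : F, s * s = 3%:R.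
Proof.
move=> h2 h3 hD e1 e2 e3 e4.
have H1 : (- (12%:R * b^+4 * c * d * m) + (12%:R * a * b^+3 * d^+2 * m) - (6%:R * a * b^+3 * c^+2) + (18%:R * a * b^+3 * c^+2 * m) + (6%:R * a^+3 * b * d^+2) - (18%:R * a^+3 * b * d^+2 * m) - (12%:R * a^+3 * b * c^+2) + (12%:R * a^+4 * c * d)) = 0.
  rewrite (_ : (- (12%:R * b^+4 * c * d * m) + (12%:R * a * b^+3 * d^+2 * m) - (6%:R * a * b^+3 * c^+2) + (18%:R * a * b^+3 * c^+2 * m) + (6%:R * a^+3 * b * d^+2) - (18%:R * a^+3 * b * d^+2 * m) - (12%:R * a^+3 * b * c^+2) + (12%:R * a^+4 * c * d)) = (- (18%:R * b * d^+2 * m) + (6%:R * b * c^+2) + (12%:R * a * c * d)) * (a^+3 + c^+3 - a * b^+2 - c * d^+2) + ((12%:R * b * c * d) + (6%:R * a * d^+2) - (18%:R * a * c^+2)) * (a^+2 * b + c^+2 * d - m * (b^+3 + d^+3)) + (- (6%:R * d^+3 * m) + (6%:R * c^+2 * d)) * (3%:R * a * c^+2 - a * d^+2 - 2%:R * b * c * d) + ((6%:R * c * d^+2) - (6%:R * c^+3)) * (b * c^+2 + 2%:R * a * c * d - 3%:R * m * b * d^+2)); last by ring.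
  by rewrite ?e1 ?e2 ?e3 ?e4; ring.
have H2 : (- (18%:R * b^+3 * c * d^+2 * m) - (3%:R * b^+3 * c^+3) + (9%:R * b^+3 * c^+3 * m) + (18%:R * a * b^+2 * d^+3 * m) - (9%:R * a * b^+2 * c^+2 * d) + (27%:R * a * b^+2 * c^+2 * d * m) + (9%:R * a^+2 * b * c * d^+2) - (27%:R * a^+2 * b * c * d^+2 * m) - (18%:R * a^+2 * b * c^+3) + (3%:R * a^+3 * d^+3) - (9%:R * a^+3 * d^+3 * m) + (18%:R * a^+3 * c^+2 * d)) = 0.
  rewrite (_ : (- (18%:R * b^+3 * c * d^+2 * m) - (3%:R * b^+3 * c^+3) + (9%:R * b^+3 * c^+3 * m) + (18%:R * a * b^+2 * d^+3 * m) - (9%:R * a * b^+2 * c^+2 * d) + (27%:R * a * b^+2 * c^+2 * d * m) + (9%:R * a^+2 * b * c * d^+2) - (27%:R * a^+2 * b * c * d^+2 * m) - (18%:R * a^+2 * b * c^+3) + (3%:R * a^+3 * d^+3) - (9%:R * a^+3 * d^+3 * m) + (18%:R * a^+3 * c^+2 * d)) = (- (9%:R * d^+3 * m) + (9%:R * c^+2 * d)) * (a^+3 + c^+3 - a * b^+2 - c * d^+2) + ((9%:R * c * d^+2) - (9%:R * c^+3)) * (a^+2 * b + c^+2 * d - m * (b^+3 + d^+3)) + ((9%:R * b^+2 * d * m) - (6%:R * a * b * c) - (3%:R * a^+2 * d)) * (3%:R * a * c^+2 - a * d^+2 - 2%:R * b * c * d) + (- (3%:R * b^+2 * c) - (6%:R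 * a * b * d) + (9%:R * a^+2 * c)) * (b * c^+2 + 2%:R * a * c * d - 3%:R * m * b * d^+2)); last by ring.
  by rewrite ?e1 ?e2 ?e3 ?e4; ring.
have H4 : (- (3%:R * b * c * d^+4 * m) - (3%:R * b * c^+3 * d^+2) + (9%:R * b * c^+3 * d^+2 * m) - (3%:R * b * c^+5) + (3%:R * a * d^+5 * m) + (3%:R * a * c^+2 * d^+3) - (9%:R * a * c^+2 * d^+3 * m) + (3%:R * a * c^+4 * d)) = 0.
  rewrite (_ : (- (3%:R * b * c * d^+4 * m) - (3%:R * b * c^+3 * d^+2) + (9%:R * b * c^+3 * d^+2 * m) - (3%:R * b * c^+5) + (3%:R * a * d^+5 * m) + (3%:R * a * c^+2 * d^+3) - (9%:R * a * c^+2 * d^+3 * m) + (3%:R * a * c^+4 * d)) = (- (3%:R * d^+3 * m) + (3%:R * c^+2 * d)) * (3%:R * a * c^+2 - a * d^+2 - 2%:R * b * c * d) + ((3%:R * c * d^+2) - (3%:R * c^+3)) * (b * c^+2 + 2%:R * a * c * d - 3%:R * m * b * d^+2)); last by ring.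
  by rewrite ?e1 ?e2 ?e3 ?e4; ring.
have hm : 3%:R * m + 1 = 0.
  have : (a * d - b * c)^+6 * 3%:R * 3%:R * (3%:R * m + 1)^+2 = 12%:R * (- (3%:R * b^+5 * c * m) + (3%:R * a * b^+4 * d * m) - (3%:R * a^+2 * b^+3 * c) + (9%:R * a^+2 * b^+3 * c * m) + (3%:R * a^+3 * b^+2 * d) - (9%:R * a^+3 * b^+2 * d * m) - (3%:R * a^+4 * b * c) + (3%:R * a^+5 * d)) * (- (3%:R * b * c * d^+4 * m) - (3%:R * b * c^+3 * d^+2) + (9%:R * b * c^+3 * d^+2 * m) - (3%:R * b * c^+5) + (3%:R * a * d^+5 * m) + (3%:R * a * c^+2 * d^+3) - (9%:R * a * c^+2 * d^+3 * m) + (3%:R * a * c^+4 * d)) - 3%:R * (- (12%:R * b^+4 * c * d * m) + (12%:R * a * b^+3 * d^+2 * m) - (6%:R * a * b^+3 * c^+2) + (18%:R * a * b^+3 * c^+2 * m) + (6%:R * a^+3 * b * d^+2) - (18%:R * a^+3 * b * d^+2 * m) - (12%:R * a^+3 * b * c^+2) + (12%:R * a^+4 * c * d)) * (- (12%:R * b^+2 * c * d^+3 * m) - (6%:R * b^+2 * c^+3 * d) + (18%:R * b^+2 * c^+3 * d * m) + (12%:R * a * b * d^+4 * m) - (12%:R * a * b * c^+4) + (6%:R * a^+2 * c * d^+3) - (18%:R * a^+2 * c * d^+3 * m) + (12%:R * a^+2 * c^+3 * d)) + (- (18%:R * b^+3 * c * d^+2 * m) - (3%:R * b^+3 * c^+3)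 + (9%:R * b^+3 * c^+3 * m) + (18%:R * a * b^+2 * d^+3 * m) - (9%:R * a * b^+2 * c^+2 * d) + (27%:R * a * b^+2 * c^+2 * d * m) + (9%:R * a^+2 * b * c * d^+2) - (27%:R * a^+2 * b * c * d^+2 * m) - (18%:R * a^+2 * b * c^+3) + (3%:R * a^+3 * d^+3) - (9%:R * a^+3 * d^+3 * m) + (18%:R * a^+3 * c^+2 * d))^+2 by ring.
  rewrite H1 H2 H4 => E.
  have : (a * d - b * c)^+6 * 3%:R * 3%:R * (3%:R * m + 1)^+2 = 0 by rewrite E; ring.
  have nz : (a * d - b * c)^+6 * 3%:R * 3%:R != 0 by rewrite !mulf_neq0 ?expf_neq0.
  by move/(mulKeq0 nz)/eqP; rewrite expf_eq0 => /andP[_ /eqP].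
split => //.
have HQ : (a * d - b * c) * (3%:R * c^+4 + 6%:R * c^+2 * d^+2 - d^+4) = 0.
  by rewrite (_ : _ * _ = (- (3%:R * b * c * d^+4 * m) - (3%:R * b * c^+3 * d^+2) + (9%:R * b * c^+3 * d^+2 * m) - (3%:R * b * c^+5) + (3%:R * a * d^+5 * m) + (3%:R * a * c^+2 * d^+3) - (9%:R * a * c^+2 * d^+3 * m) + (3%:R * a * c^+4 * d)) + (3%:R * m + 1) * (a * d - b * c) * (3%:R * c^+2 * d^+2 - d^+4)); [rewrite H4 hm; ring | ring].
have HQ' := mulKeq0 hD HQ.
case: (eqVneq (c^+2 + d^+2) 0) => hcd.
  have d0 : d = 0.
    have ec : c^+2 = - d^+2 by apply/eqP; rewrite -addr_eq0 hcd.
    have : 2%:R * 2%:R * d^+4 = 0.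
      rewrite -[RHS]oppr0 -HQ' (_ : 3%:R * c^+4 + 6%:R * c^+2 * d^+2 - d^+4 = 3%:R * (c^+2)^+2 + 6%:R * c^+2 * d^+2 - d^+4); last by ring.
      rewrite ec; ring.
    by move/(mulKeq0 (mulf_neq0 h2 h2))/eqP; rewrite expf_eq0 => /andP[_ /eqP].
  have c0 : c = 0 by move: hcd; rewrite d0 expr0n /= addr0 => /eqP; rewrite expf_eq0 /= => /eqP.
  by move: hD; rewrite c0 d0 !mulr0 subr0 eqxx.
exists (2%:R * d^+2 / (c^+2 + d^+2)).
rewrite (_ : _ * _ = 3%:R - (3%:R * c^+4 + 6%:R * c^+2 * d^+2 - d^+4) / (c^+2 + d^+2)^+2); last by field.
by rewrite HQ' mul0r subr0.
Qed.

End S.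

Unset Implicit Arguments.

Theorem lemma7p4 (F : finFieldType) (mu : F) :
  odd #|F| -> (#|F| %% 3 = 2)%N ->
  (forall x : F, x * x != mu) ->
  (same_orbit (line_mx (vec4 1 0 0 1) (vec4 0 0 1 0))
              (line_mx (vec4 0 mu 0 1) (vec4 1 0 1 0))
   <-> (mu = - (3%:R)^-1 /\ (#|F| %% 12 = 11)%N)).
Proof.
move=> hodd h3 hmu.
have h2F := char2 hodd; have h3F := char3 h3.
split.
- case=> A [[hA HA] hL].
  have [l [a [b [c [d [hl hD eA]]]]]] :=
    classify h2F h3F hA (fun v hv hc => iffLR (HA v hv) hc).
  move: hL => /andP [hsub _].
  move: hsub; rewrite line_mx_sub => /andP [hu hw].
  have [u1 u2] := in_lmu hu; have [w1 w2] := in_lmu hw.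
  rewrite eA -!scalemxAr !vec4_mulmx !mxE /= in u1 u2 w1 w2.
  have E1 : a^+3 + c^+3 - a * b^+2 - c * d^+2 = 0.
    apply: (mulKeq0 hl); move/eqP: u1; rewrite -subr_eq0 => /eqP u1; rewrite -[RHS]u1; ring.
  have E2 : a^+2 * b + c^+2 * d - mu * (b^+3 + d^+3) = 0.
    apply: (mulKeq0 hl); move/eqP: u2; rewrite -subr_eq0 => /eqP u2; rewrite -[RHS]u2; ring.
  have E3 : 3%:R * a * c^+2 - a * d^+2 - 2%:R * b * c * d = 0.
    apply: (mulKeq0 hl); move/eqP: w1; rewrite -subr_eq0 => /eqP w1; rewrite -[RHS]w1; ring.
  have E4 : b * c^+2 + 2%:R * a * c * d - 3%:R * mu * b * d^+2 = 0.
    apply: (mulKeq0 hl); move/eqP: w2; rewrite -subr_eq0 => /eqP w2; rewrite -[RHS]w2; ring.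
  have [hm [s hs]] := alg_fwd h2F h3F hD E1 E2 E3 E4.
  have emu : mu = - (3%:R)^-1.
    apply: (mulfI h3F); rewrite mulrN mulfV //; apply/eqP; rewrite -addr_eq0 hm.
    by [].
  split => //.
  have nm1 : forall z : F, z * z != -1.
    move=> z; apply/eqP => hz.
    have s0 : s != 0 by apply: contra_eq_neq hs => ->; rewrite mulr0 eq_sym.
    have e : z / s * (z / s) = mu.
      by rewrite emu (_ : z / s * (z / s) = (z * z) / (s * s)); [rewrite hz hs mulN1r | field].
    by move: (hmu (z / s)); rewrite e eqxx.
  have h4 : (#|F| %% 4 <> 1)%N by move=> h4; have [z hz] := m1_sq h4; move/eqP: (nm1 z).
  have o2 : (#|F| %% 2 = 1)%N by rewrite modn2 hodd.
  lia.
- case=> emu h12.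
  have [r [t [hroot hrel]]] := witness_ex hodd h3 h12 emu hmu.
  have [hD E1 E2 E3 E4] := alg_bwd h2F h3F hroot hrel (erefl _) (erefl _) (erefl _) (erefl _) emu.
  exists (sym3 (2%:R * r * t) ((3%:R * r^+2 - 1) * t) r 1); split; first exact: inGq_sym3 hD.
  have hsub : (line_mx (vec4 1 0 0 1) (vec4 0 0 1 0) *m sym3 (2%:R * r * t) ((3%:R * r^+2 - 1) * t) r 1
               <= line_mx (vec4 0 mu 0 1) (vec4 1 0 1 0))%MS.
    rewrite line_mx_sub.
    apply/andP; split; apply: in_lmu'; rewrite !vec4_mulmx !mxE /=.
    - by apply/eqP; rewrite -subr_eq0; apply/eqP; rewrite -[RHS]E1; ring.
    - by apply/eqP; rewrite -subr_eq0; apply/eqP; rewrite -[RHS]E2; ring.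
    - by apply/eqP; rewrite -subr_eq0; apply/eqP; rewrite -[RHS]E3; ring.
    - by apply/eqP; rewrite -subr_eq0; apply/eqP; rewrite -[RHS]E4; ring.
  rewrite -(eq_leqif (mxrank_leqif_eq hsub)) eqn_leq mxrankS //=.
  rewrite mxrankMfree; last by rewrite row_free_unit; case: (inGq_sym3 hD).
  by move: (Lc_free F) => /eqP ->; exact: rank_leq_row.
Qed.
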